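(* Let $(X_i)_{i\in I}$ be a family of zero-dimensional coherent domains and $F\subseteq\prod_{i\in I}\mathcal V_{\le1}(X_i)\subseteq\prod_{i\in I}\mathcal V(X_i)$ a finite set. Then $\overline{\mathrm{conv}\,F}={\downarrow}\mathrm{conv}\,F$; in particular $b(F)={\downarrow}\mathrm{conv}\,F\cap{\uparrow}\mathrm{conv}\,F$.
   Context: A domain is a continuous dcpo; coherent means the intersection of two compact saturated subsets is compact; zero-dimensional means the Scott topology has a basis of clopens. $\mathcal V(X)$ is the set of continuous valuations on $X$ (strict, monotone, modular maps from Scott-opens to $[0,\infty]$ preserving directed unions), ordered pointwise, with pointwise addition and scaling; $\mathcal V_{\le1}(X)$ those with $\mu(X)\le1$. Products carry the componentwise order and operations. $\mathrm{conv}\,F$ is the set of finite convex combinations of elements of $F$, $\overline{A}$ the Scott closure, ${\downarrow}A$, ${\uparrow}A$ down- and up-closures, and $b(F)=\overline{\mathrm{conv}\,F}\cap{\uparrow}\mathrm{conv}\,F$. *)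

(* Defs.v *)
From HB Require Import structures.
From mathcomp Require Import all_boot all_order all_algebra.
From mathcomp Require Import boolp classical_sets functions cardinality reals constructive_ereal ereal.
Set Implicit Arguments. Unset Strict Implicit. Unset Printing Implicit Defensive.
Import Order.TTheory GRing.Theory Num.Theory.
Local Open Scope classical_set_scope.
Local Open Scope ring_scope.

(* list membership without an eqType *)
Fixpoint inseq {A : Type} (a : A) (s : seq A) : Prop :=
  if s is b :: s' then b = a \/ inseq a s' else False.

Section OrderTheory.
Variables (T : Type) (le : T -> T -> Prop).

Definition partial_order : Prop :=
  [/\ forall x, le x x,
      forall x y z, le x y -> le y z -> le x z &
      forall x y, le x y -> le y x -> x = y].

Definition directed_in (S D : set T) : Prop :=
  [/\ D `<=` S, D !=set0 &
      forall x y, D x -> D y -> exists2 z, D z & le x z /\ le y z].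

Definition is_sup_in (S D : set T) (s : T) : Prop :=
  [/\ S s, forall d, D d -> le d s &
      forall u, S u -> (forall d, D d -> le d u) -> le s u].

Definition directed (D : set T) := directed_in setT D.
Definition is_sup (D : set T) (s : T) := is_sup_in setT D s.

Definition dcpo : Prop :=
  partial_order /\ forall D, directed D -> exists s, is_sup D s.

Definition way_below (x y : T) : Prop :=
  forall D s, directed D -> is_sup D s -> le y s -> exists2 d, D d & le x d.

Definition domain : Prop :=
  dcpo /\ forall x, directed [set y | way_below y x] /\
                    is_sup [set y | way_below y x] x.

Definition scott_open (U : set T) : Prop :=
  (forall x y, U x -> le x y -> U y) /\
  (forall D s, directed D -> is_sup D s -> U s -> D `&` U !=set0).

Definition scott_compact (K : set T) : Prop :=
  forall (J : Type) (U : J -> set T), (forall j, scott_open (U j)) ->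
    K `<=` \bigcup_j U j ->
    exists s : seq J, K `<=` \bigcup_(j in [set j | inseq j s]) U j.

Definition saturated (A : set T) : Prop :=
  A = \bigcap_(U in [set U | scott_open U /\ A `<=` U]) U.

Definition coherent : Prop :=
  forall K1 K2, scott_compact K1 -> saturated K1 ->
                scott_compact K2 -> saturated K2 -> scott_compact (K1 `&` K2).

Definition scott_clopen (C : set T) : Prop := scott_open C /\ scott_open (~` C).

Definition scott_zero_dim : Prop :=
  forall U x, scott_open U -> U x -> exists2 C, scott_clopen C & C x /\ C `<=` U.

Definition scott_closed_in (S C : set T) : Prop :=
  [/\ C `<=` S,
      forall x c, S x -> C c -> le x c -> C x &
      forall D s, D `<=` C -> directed_in S D -> is_sup_in S D s -> C s].

Definition scott_closure_in (S A : set T) : set T :=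
  \bigcap_(C in [set C | scott_closed_in S C /\ A `<=` C]) C.

Definition down_in (S A : set T) : set T :=
  [set x | S x /\ exists2 a, A a & le x a].
Definition up_in (S A : set T) : set T :=
  [set x | S x /\ exists2 a, A a & le a x].

End OrderTheory.

Section Valuations.
Variables (R : realType) (X : Type) (le : X -> X -> Prop).

Definition sopen := {U : set X | scott_open le U}.

Definition valT := sopen -> \bar R.

Definition is_cval (mu : valT) : Prop :=
  [/\ forall U, (0 <= mu U)%E,
      forall U, sval U = set0 -> mu U = 0%E,
      forall U V, sval U `<=` sval V -> (mu U <= mu V)%E,
      forall U V W Z, sval W = sval U `|` sval V -> sval Z = sval U `&` sval V ->
                      (mu U + mu V = mu W + mu Z)%E &
      forall (J : Type) (D : J -> sopen) (W : sopen),
        (exists j : J, True) ->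
        (forall j k, exists l, sval (D j) `<=` sval (D l) /\ sval (D k) `<=` sval (D l)) ->
        sval W = \bigcup_j sval (D j) ->
        mu W = ereal_sup [set mu (D j) | j in [set: J]]].

Definition is_cval_le1 (mu : valT) : Prop :=
  is_cval mu /\ forall U : sopen, sval U = setT -> (mu U <= 1)%E.

End Valuations.

Unset Implicit Arguments.
Section Product.
Variables (R : realType) (I : Type) (X : I -> Type) (le : forall i, X i -> X i -> Prop).

Definition prodT := forall i, valT R (le i).

Definition prodV : set prodT := [set f | forall i, is_cval (f i)].
Definition prodV1 : set prodT := [set f | forall i, is_cval_le1 (f i)].

Definition vle (f g : prodT) : Prop := forall i U, (f i U <= g i U)%E.

Definition convcomb (n : nat) (r : 'I_n -> R) (f : 'I_n -> prodT) : prodT :=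
  fun i U => (\sum_(k < n) (r k)%:E * f k i U)%E.

Definition conv (F : set prodT) : set prodT :=
  [set g | exists n (r : 'I_n -> R) (f : 'I_n -> prodT),
     [/\ forall k, F (f k), forall k, 0 <= r k, \sum_(k < n) r k = 1 &
         g = convcomb n r f]].

Definition vclosure (A : set prodT) := scott_closure_in vle prodV A.
Definition vdown (A : set prodT) := down_in vle prodV A.
Definition vup (A : set prodT) := up_in vle prodV A.

Definition bF (F : set prodT) := vclosure (conv F) `&` vup (conv F).

End Product.

Arguments prodT R {I X} le.
Arguments prodV {R I X} le.
Arguments prodV1 {R I X} le.
Arguments vle {R I X le}.
Arguments convcomb {R I X le} n r f.
Arguments conv {R I X le} F.
Arguments vclosure {R I X le} A.
Arguments vdown {R I X le} A.
Arguments vup {R I X le} A.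
Arguments bF {R I X le} F.

(* Main.v *)
Require Import Defs.
From mathcomp Require Import all_boot all_order all_algebra.
From mathcomp Require Import boolp classical_sets functions cardinality reals constructive_ereal ereal.
From mathcomp Require Import topology normedtype.
Import Order.TTheory GRing.Theory Num.Theory numFieldNormedType.Exports.
Local Open Scope classical_set_scope.
Local Open Scope ring_scope.

Section A.
Context {R : realType} {I : Type} {X : I -> Type} {le : forall i, X i -> X i -> Prop}.

Lemma setT_open i : scott_open (le i) setT.
Proof. by split=> // D s [_ [d Dd] _] _ _; exists d. Qed.

Lemma cval_fin {i} {mu : valT R (le i)} : is_cval_le1 mu ->
  forall U, mu U = (fine (mu U))%:E /\ 0 <= fine (mu U).
Proof.
case=> [[h0 _ hmono _ _] h1] U.
pose T : sopen (le i) := exist _ setT (setT_open i).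
have : (mu U <= 1)%E by apply: le_trans (hmono U T (@subsetT _ _)) (h1 T erefl).
by case: (mu U) (h0 U) => [r| |] //=; rewrite lee_fin.
Qed.

Lemma dir_fin {J : Type} {T : Type} {D : J -> set T} (j0 : J)
  (dir : forall j k, exists l, D j `<=` D l /\ D k `<=` D l) n :
  forall jf : 'I_n -> J, exists l, forall k, D (jf k) `<=` D l.
Proof.
elim: n => [|n IH] jf; first by exists j0; case.
have [l Hl] := IH (fun k => jf (lift ord0 k)).
have [l' [H1 H2]] := dir l (jf ord0).
exists l' => k; case: (unliftP ord0 k) => [k'|] ->; last exact: H2.
by apply: subset_trans H1; apply: Hl.
Qed.

Lemma conv_prodV (F : set (prodT R le)) : F `<=` prodV1 le -> conv F `<=` prodV le.
Proof.
move=> HF g [n [r [f [Ff r0 r1 ->]]]] i.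
pose a k U := fine (f k i U).
have fa k U : f k i U = (a k U)%:E by case: (cval_fin (HF _ (Ff k) i) U).
have a0 k U : 0 <= a k U by case: (cval_fin (HF _ (Ff k) i) U).
have cv k : is_cval (f k i) by case: (HF _ (Ff k) i).
have E U : convcomb n r f i U = (\sum_k r k * a k U)%:E.
  by rewrite /convcomb -sumEFin; apply: eq_bigr => k _; rewrite fa.
split.
- by move=> U; rewrite E lee_fin sumr_ge0 // => k _; rewrite mulr_ge0.
- move=> U U0; rewrite E big1 // => k _.
  have : f k i U = 0%E by case: (cv k) => _ h _ _ _; apply: h.
  by rewrite fa => -[->]; rewrite mulr0.
- move=> U V UV; rewrite !E lee_fin; apply: ler_sum => k _.
  apply: ler_wpM2l => //; rewrite -lee_fin -!fa.
  by case: (cv k) => _ _ h _ _; apply: h.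
- move=> U V W Z HW HZ; rewrite !E -!EFinD; congr (_%:E).
  rewrite -!big_split /=; apply: eq_bigr => k _; rewrite -!mulrDr; congr (_ * _).
  have : (f k i U + f k i V = f k i W + f k i Z)%E by case: (cv k) => _ _ _ h _; apply: h.
  by rewrite !fa -!EFinD => -[].
- move=> J D W [j0 _] dir HW; apply/eqP; rewrite eq_le; apply/andP; split; last first.
    apply: ge_ereal_sup => _ [j _ <-]; rewrite !E lee_fin; apply: ler_sum => k _.
    apply: ler_wpM2l => //; rewrite -lee_fin -!fa.
    case: (cv k) => _ _ h _ _; apply: h; rewrite HW => x Dx; by exists j.
  apply/lee_addgt0Pr => e e0.
  have hk k : exists j, a k W - e < a k (D j).
    have : (f k i W = ereal_sup [set f k i (D j) | j in [set: J]])%E.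
      by case: (cv k) => _ _ _ _ h; apply: h => //; exists j0.
    move=> hsup.
    have : ((a k W - e)%:E < ereal_sup [set f k i (D j) | j in [set: J]])%E.
      by rewrite -hsup fa lte_fin ltrBlDr ltrDl.
    by move=> /ereal_sup_gt [_ [j _ <-]]; rewrite fa lte_fin => h; exists j.
  have [jf hjf] : exists jf : 'I_n -> J, forall k, a k W - e < a k (D (jf k)).
    exists (fun k => projT1 (cid (hk k))) => k; exact: (projT2 (cid (hk k))).
  have [l Hl] := @dir_fin _ _ (fun j => sval (D j)) j0 dir _ jf.
  apply: (@le_trans _ _ (convcomb n r f i (D l) + e%:E)%E); last first.
    by rewrite leeD2r //; apply: ereal_sup_ubound; exists l.
  rewrite !E -EFinD lee_fin.
  have -> : e = \sum_k r k * e by rewrite -mulr_suml r1 mul1r.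
  rewrite -big_split /=; apply: ler_sum => k _; rewrite -mulrDr; apply: ler_wpM2l => //.
  rewrite -lerBlDr; apply: ltW; apply: lt_le_trans (hjf k) _.
  rewrite -lee_fin -!fa; case: (cv k) => _ _ h _ _; exact: h.
Qed.
End A.

Section Top.
Context {R : realType} {n : nat}.
Local Notation T := {ptws 'I_n -> R}.
Lemma proj_cont k : continuous (fun r : T => r k).
Proof. exact: (@proj_continuous _ (fun _ => R) k). Qed.
Lemma sum_cont (c : 'I_n -> R) : continuous (fun r : T => \sum_k r k * c k).
Proof.
move=> r.
have := (@cvg_big R 'I_n +%R 0 xpredT (@add_continuous R) T (nbhs r) (index_enum _) (fun k r => r k * c k) (fun k => r k * c k) _).
apply => // k _.  apply: cvgMr_tmp; exact: proj_cont.
Qed.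
Lemma sum_cont1 : continuous (fun r : T => \sum_k r k).
Proof.
move=> r.
have := (@cvg_big R 'I_n +%R 0 xpredT (@add_continuous R) T (nbhs r) (index_enum _) (fun k r => r k) (fun k => r k) _).
apply => // k _; exact: proj_cont.
Qed.
Lemma cube_compact : compact [set f : T | forall i, `[(0:R), 1]%classic (f i)].
Proof. have := (@tychonoff _ (fun _ : 'I_n => R) (fun _ => `[(0:R), 1]%classic)). apply => i; exact: segment_compact. Qed.

Definition simplex : set T := [set r | (forall k, 0 <= r k) /\ \sum_k r k = 1].

Lemma simplex_compact : compact simplex.
Proof.
apply: (subclosed_compact _ cube_compact).
  have -> : simplex = (\bigcap_(k in setT) [set r : T | 0 <= r k]) `&` ((fun r : T => \sum_k r k) @^-1` [set y | y = 1]).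
    apply/seteqP; split => r /= [h1 h2]; split => //.
    by move=> k _; apply: h1.
    by move=> k; apply: h1.
  apply: closedI.
    apply: closed_bigI => k _.
    apply: (@preimage_closed _ _ (fun r : T => r k) [set y : R | 0 <= y]); last exact: closed_ge.
    by move=> ? _; exact: proj_cont.
  apply: preimage_closed; last exact: closed_eq.
  by move=> ? _; exact: sum_cont1.
move=> r [h0 h1] k /=; rewrite in_itv /=; apply/andP; split => //.
rewrite -h1 (bigD1 k) //= lerDl sumr_ge0 // => *; exact: h0.
Qed.

Lemma closed_constr (g : T -> R) (cg : continuous g) (x : \bar R) :
  closed [set r : T | (x <= (g r)%:E)%E].
Proof.
case: x => [x| |].
- have -> : [set r : T | (x%:E <= (g r)%:E)%E] = g @^-1` [set y | x <= y].
    by apply/seteqP; split => r /=; rewrite lee_fin.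
  apply: preimage_closed; [move=> ? _; exact: cg | exact: closed_ge].
- have -> : [set r : T | (+oo <= (g r)%:E)%E] = set0.
    by apply/seteqP; split => r //=; rewrite leNgt ltry.
  exact: closed0.
- have -> : [set r : T | (-oo <= (g r)%:E)%E] = setT.
    by apply/seteqP; split => r //= _; rewrite leNye.
  exact: closedT.
Qed.
End Top.

Section B.
Context {R : realType} {I : Type} {X : I -> Type} {le : forall i, X i -> X i -> Prop}.
Local Notation P := (prodT R le).

Lemma convcombE {F : set P} (HF : F `<=` prodV1 le) {m} {r} {f : 'I_m -> P}
  (Ff : forall k, F (f k)) i U :
  convcomb m r f i U = (\sum_k r k * fine (f k i U))%:E.
Proof.
rewrite /convcomb -sumEFin; apply: eq_bigr => k _.
by have [h _] := cval_fin (HF _ (Ff k) i) U; rewrite {1}h.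
Qed.

Lemma vle_refl (x : P) : vle x x.
Proof. by move=> i U. Qed.

Lemma vle_trans (x y z : P) : vle x y -> vle y z -> vle x z.
Proof. by move=> h1 h2 i U; apply: le_trans (h1 i U) (h2 i U). Qed.

Lemma key (F : set P) (HF : F `<=` prodV1 le) (Hfin : finite_set F) (D : set P)
  (D0 : D !=set0)
  (Ddir : forall x y, D x -> D y -> exists2 z, D z & vle x z /\ vle y z)
  (Dsub : forall d, D d -> exists2 a, conv F a & vle d a) :
  exists2 c, conv F c & forall d, D d -> vle d c.
Proof.
have [n [e [eF esurj]]] : exists n (e : 'I_n -> P),
    (forall k, F (e k)) /\ (forall x, F x -> exists k, e k = x).
  case: Hfin => m Hm.
  have : (F #<= `I_m)%card by case/card_eqPle: Hm.
  move=> /pfcard_geP [F0 | /surjfunPex [f Ff]].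
    exists 0%N, (fun _ => fun i U => 0%E); split; first by case.
    by move=> x; rewrite F0.
  exists m, (fun k => f (val k)); split.
    by move=> k; rewrite Ff; exists (val k) => //=; exact: ltn_ord.
  by move=> x; rewrite Ff => -[k km <-]; exists (Ordinal km).
pose K d : set {ptws 'I_n -> R} := [set r | simplex r /\ vle d (convcomb n r e)].
have rep : forall g, conv F g -> exists2 r, simplex r & g = convcomb n r e.
  move=> g [m [r' [f [Ff r0 r1 ->]]]].
  have hidx k : exists j, e j = f k by apply: esurj.
  pose idx k := projT1 (cid (hidx k)).
  have hidxE k : e (idx k) = f k := projT2 (cid (hidx k)).
  exists (fun j => \sum_(k | idx k == j) r' k).
    split; first by move=> j; apply: sumr_ge0 => k _.
    by rewrite /= -r1 (partition_big idx xpredT).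
  apply: functional_extensionality_dep => i; apply: funext => U.
  rewrite (convcombE HF Ff) (convcombE HF eF); congr (_%:E).
  rewrite [RHS](eq_bigr (fun j => \sum_(k | idx k == j) r' k * fine (f k i U))); last first.
    move=> j _; rewrite mulr_suml; apply: eq_bigr => k /eqP <-; by rewrite hidxE.
  by rewrite (partition_big idx xpredT).
have Kcl d : closed (K d).
  have -> : K d = simplex `&` \bigcap_(i in setT) \bigcap_(U in setT)
      [set r : {ptws 'I_n -> R} | (d i U <= (\sum_k r k * fine (e k i U))%:E)%E].
    apply/seteqP; split => r /= [h1 h2]; split => //.
      by move=> i _ U _; have := h2 i U; rewrite (convcombE HF eF).
    by move=> i U; rewrite (convcombE HF eF); apply: h2.
  apply: closedI; first by apply: compact_closed; [exact: hausdorff_product | exact: simplex_compact].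
  apply: closed_bigI => i _; apply: closed_bigI => U _.
  apply: closed_constr; exact: sum_cont.
pose G := filter_from D K.
have GF : Filter G.
  apply: filter_from_filter; first by case: D0 => d Dd; exists d.
  move=> d1 d2 D1 D2; have [z Dz [h1 h2]] := Ddir _ _ D1 D2.
  exists z => // r [sr hz]; split; split => //; exact: vle_trans hz.
have GP : ProperFilter G.
  apply: filter_from_proper => // d Dd.
  have [a Ca da] := Dsub d Dd; have [r sr ra] := rep a Ca.
  by exists r; split => //; rewrite -ra.
have Gs : G simplex by case: D0 => d Dd; exists d => // r [].
have [c [sc clc]] := simplex_compact G GP Gs.
exists (convcomb n c e); first by exists n, c, e; case: sc.
move=> d Dd.
have : K d c.
  apply: Kcl => B Bc; apply: clc => //; exists d => //.
by case.
Qed.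

End B.

Theorem mainTheorem16 (R : realType) (I : Type) (X : I -> Type)
    (le : forall i, X i -> X i -> Prop)
    (Hdom : forall i, domain (le i))
    (Hcoh : forall i, coherent (le i))
    (Hzd : forall i, scott_zero_dim (le i))
    (F : set (prodT R le))
    (Hfin : finite_set F)
    (HF : F `<=` prodV1 le) :
  vclosure (conv F) = vdown (conv F) /\
  bF F = vdown (conv F) `&` vup (conv F).
Proof.
have HC := conv_prodV F HF.
have E : vclosure (conv F) = vdown (conv F).
  apply/seteqP; split.
  - move=> x Hx; apply: Hx; split; last first.
      by move=> a Ca; split; [exact: HC | exists a => //; exact: vle_refl].
    split.
    + by move=> y [].
    + move=> x' c Sx [Sc [a Ca ca]] xc; split => //; exists a => //.
      exact: vle_trans xc ca.
    + move=> D s Dsub [_ D0 Ddir] [Ss sub_ub least]; split => //.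
      have [c Cc Hc] := key F HF Hfin D D0 Ddir (fun d Dd => proj2 (Dsub d Dd)).
      by exists c => //; apply: least => //; exact: HC.
  - move=> x [Sx [a Ca xa]] C' [[_ downC' _] CsubC'].
    exact: downC' x a Sx (CsubC' a Ca) xa.
split => //.
by rewrite /bF E.
Qed.
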